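(* Let $n\geq 1$ and $k\geq 1$ be integers with $k\not\equiv 1 \pmod 3$. Then $\gcd(B_{k,n},B_{k,n+1})=1$.
   Context: For an integer $k\geq 1$, the generalized balancing numbers are defined by $B_{k,0}=0$, $B_{k,1}=1$ and $B_{k,n}=3kB_{k,n-1}+(1-k)B_{k,n-2}$ for $n\geq 2$. *)

(* Defs.v *)
From mathcomp Require Import all_boot all_order all_algebra.
Set Implicit Arguments. Unset Strict Implicit. Unset Printing Implicit Defensive.
Import Order.TTheory GRing.Theory Num.Theory.
Local Open Scope ring_scope.

(* Generalized balancing numbers B_{k,n} as integers:
   B_{k,0}=0, B_{k,1}=1, B_{k,n}=3k B_{k,n-1} + (1-k) B_{k,n-2}. *)
Fixpoint balpair (k : nat) (n : nat) : int * int :=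
  match n with
  | 0%N => (0, 1)
  | n'.+1 => let p := balpair k n' in
             (p.2, (3 * k%:Z) * p.2 + (1 - k%:Z) * p.1)
  end.

Definition B (k n : nat) : int := (balpair k n).1.

Lemma B_0 k : B k 0 = 0. Proof. by []. Qed.
Lemma B_1 k : B k 1 = 1. Proof. by []. Qed.
Lemma B_rec k n : B k n.+2 = 3 * k%:Z * B k n.+1 + (1 - k%:Z) * B k n.
Proof. by []. Qed.

(* Main.v *)
Require Import Defs.
From mathcomp Require Import all_boot all_order all_algebra.
From mathcomp Require Import zify ring.
Import GRing.Theory.
Local Open Scope ring_scope.

Lemma L1 (k : nat) (hk : (1 <= k)%N) (hk3 : (k %% 3 != 1)%N) :
  coprimez 3 (k%:Z - 1).
Proof.
rewrite coprimezE.
have -> : `|k%:Z - 1|%N = (k - 1)%N.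
  lia.
rewrite prime_coprime //; apply/negP => /dvdnP [q Hq].
move/eqP: hk3; apply; lia.
Qed.

Lemma L2 (k : nat) (hk : (1 <= k)%N) (hk3 : (k %% 3 != 1)%N) m :
  coprimez (B k m.+1) (k%:Z - 1).
Proof.
elim: m => [|m IH].
  by rewrite /coprimez gcdzC gcdz1.
have -> : B k m.+2 = (3 * B k m.+1 - B k m) * (k%:Z - 1) + 3 * B k m.+1.
  rewrite B_rec; ring.
rewrite coprimez_sym /coprimez gcdzMDl -/(coprimez _ _) coprimezMr.
by rewrite coprimez_sym L1 // coprimez_sym IH.
Qed.

Lemma L3 (k : nat) (hk : (1 <= k)%N) (hk3 : (k %% 3 != 1)%N) m :
  coprimez (B k m.+1) (B k m.+2).
Proof.
elim: m => [|m IH].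
  by rewrite /coprimez B_1 gcdzC gcdz1.
have -> : B k m.+3 = (3 * k%:Z) * B k m.+2 + - ((k%:Z - 1) * B k m.+1).
  rewrite B_rec; ring.
rewrite /coprimez gcdzMDl gcdzN -/(coprimez _ _) coprimezMr.
by rewrite L2 // coprimez_sym IH.
Qed.

Theorem mainTheorem11 (k n : nat) (hn : (1 <= n)%N) (hk : (1 <= k)%N)
  (hk3 : (k %% 3 != 1)%N) :
  gcdz (B k n) (B k n.+1) = 1.
Proof.
case: n hn => [//|m] _.
by apply/eqP; apply: L3.
Qed.
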